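(* Let $f:M\to M$ be a continuous map of a compact metric space and $\{\phi_n\}$ a sequence of continuous functions such that for some $L>0$, $|\phi_n(x)|/n\le L$ for $\nu$-a.e. $x$, all $n$, and all $\nu\in\mathcal M_f$. If $\{\phi_n\}$ is subadditive, then $\lim_{n\to\infty}P(\phi_n/n)$ exists and equals $\inf_{n>0}P(\phi_n/n)$. If $\{\phi_n\}$ is superadditive, then $\lim_{n\to\infty}P(\phi_n/n)$ exists and equals $\sup_{n>0}P(\phi_n/n)$.
   Context: $\mathcal M_f$ is the set of $f$-invariant Borel probability measures; $P(\phi)=\sup_{\nu\in\mathcal M_f}\{h(\nu)+\int\phi\,d\nu\}$ is the topological pressure of continuous $\phi$, $h$ the metric entropy. Subadditive (resp. superadditive): $\phi_{n+m}\le\phi_n+\phi_m\circ f^n$ (resp. $\ge$) for all $n,m$. *)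

(* Defs.v *)
From HB Require Import structures.
From mathcomp Require Import all_boot all_order all_algebra.
From mathcomp Require Import all_classical all_reals all_analysis.
Set Implicit Arguments. Unset Strict Implicit. Unset Printing Implicit Defensive.
Import Order.TTheory GRing.Theory Num.Theory.
Import numFieldNormedType.Exports.
Local Open Scope classical_set_scope.
Local Open Scope ring_scope.

Section Thermo.
Variables (R : realType) (M : pseudoPMetricType R).

Definition Borel := g_sigma_algebraType (@open M).

Definition is_invariant (f : M -> M) (nu : probability Borel R) : Prop :=
  forall A : set Borel, measurable A -> nu (f @^-1` A) = nu A.

Definition Mf (f : M -> M) : set (probability Borel R) :=
  [set nu | is_invariant f nu].

Definition eta (x : R) : R := if x == 0 then 0 else - (x * ln x).

Definition is_mpart (k : nat) (A : 'I_k -> set Borel) : Prop :=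
  [/\ forall i, measurable (A i),
      forall i j, i != j -> A i `&` A j = set0 &
      \bigcup_(i in [set: 'I_k]) A i = [set: Borel] ].

(* H_nu( xi v f^{-1} xi v ... v f^{-(n-1)} xi ) *)
Definition Hjoin (f : M -> M) (nu : probability Borel R) (k : nat)
  (A : 'I_k -> set Borel) (n : nat) : R :=
  \sum_(w : {ffun 'I_n -> 'I_k})
     eta (fine (nu [set x : Borel | forall i : 'I_n, A (w i) (iter i f x)])).

Definition hpart (f : M -> M) (nu : probability Borel R) (k : nat)
  (A : 'I_k -> set Borel) : R :=
  lim ((fun n : nat => Hjoin f nu A n / n%:R) @ \oo).

Definition hmu (f : M -> M) (nu : probability Borel R) : \bar R :=
  ereal_sup [set r | exists k (A : 'I_k -> set Borel),
                       is_mpart A /\ r = (hpart f nu A)%:E].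

(* topological pressure via the variational formula *)
Definition pressure (f : M -> M) (g : M -> R) : \bar R :=
  ereal_sup [set (hmu f nu + \int[nu]_x (g x)%:E)%E | nu in Mf f].

Definition subadditive_seq (f : M -> M) (phi : nat -> M -> R) : Prop :=
  forall n m, (0 < n)%N -> (0 < m)%N ->
    forall x, phi (n + m)%N x <= phi n x + phi m (iter n f x).

Definition superadditive_seq (f : M -> M) (phi : nat -> M -> R) : Prop :=
  forall n m, (0 < n)%N -> (0 < m)%N ->
    forall x, phi (n + m)%N x >= phi n x + phi m (iter n f x).

End Thermo.

(* Main.v *)
Require Import Defs.
From HB Require Import structures.
From mathcomp Require Import all_boot all_order all_algebra.
From mathcomp Require Import all_classical all_reals all_analysis.
From mathcomp Require Import measurable_realfun.
Import Order.TTheory GRing.Theory Num.Theory.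
Import numFieldNormedType.Exports.
Local Open Scope classical_set_scope.
Local Open Scope ring_scope.
Set Implicit Arguments. Unset Strict Implicit.
From mathcomp Require Import lra.
Lemma seq_inf_cvg (R : realType) (P : nat -> \bar R) (K : R) : 0 <= K ->
  (forall n m, (0 < n)%N -> (0 < m)%N -> (P m <= P n + (K * n%:R / m%:R)%:E)%E) ->
  P @ \oo --> ereal_inf [set P n | n in [set n | (0 < n)%N]].
Proof.
move=> K0 H; rewrite -cvg_shiftS /=.
apply: limn_esup_le_cvg; last by move=> n; apply: ereal_inf_lbound; exists n.+1.
apply: le_ereal_inf_tmp => _ [n /= n0 <-].
apply/lee_addgt0Pr => e e0.
pose k := Num.trunc (K * n%:R / e).
have Hk : K * n%:R / k.+1%:R <= e.
  have := truncnS_gt (K * n%:R / e); rewrite ltr_pdivrMr // => h.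
  by rewrite ler_pdivrMr ?ltr0Sn // [e * _]mulrC; exact: ltW.
apply: ge_ereal_inf; exists (ereal_sup ((fun m => P m.+1) @` [set m | (k <= m)%N])).
  by exists [set m | (k <= m)%N] => //; exists k.
apply: ge_ereal_sup => _ [m /= km <-].
apply: le_trans (H n m.+1 n0 isT) _; rewrite leeD2l // lee_fin.
apply: le_trans Hk; apply: ler_pM => //; first by apply: mulr_ge0.
by rewrite lef_pV2 ?posrE ?ltr0Sn // ler_nat.
Qed.

Lemma seq_sup_cvg (R : realType) (P : nat -> \bar R) (K : R) : 0 <= K ->
  (forall n m, (0 < n)%N -> (0 < m)%N -> (P n - (K * n%:R / m%:R)%:E <= P m)%E) ->
  P @ \oo --> ereal_sup [set P n | n in [set n | (0 < n)%N]].
Proof.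
move=> K0 H.
have := @seq_inf_cvg R (fun n => - P n)%E K K0.
have H' : forall n m, (0 < n)%N -> (0 < m)%N ->
    (- P m <= - P n + (K * n%:R / m%:R)%:E)%E.
  move=> n m n0 m0; have := H n m n0 m0; by rewrite -leeN2 oppeB // fin_num_adde_defl.
move=> /(_ H') /cvgeN.
have -> : (fun x => - - P x)%E = P by apply/funext => x; rewrite oppeK.
rewrite /ereal_inf oppeK; congr (_ --> ereal_sup _).
apply/seteqP; split => x.
  by case=> _ [n n0 <-] <-; exists n => //; rewrite oppeK.
by case=> n n0 <-; exists (- P n)%E; [exists n | rewrite oppeK].
Qed.


Lemma sub_bound (R : realType) (c : nat -> R) (L : R) : 0 <= L ->
  (forall j, (0 < j)%N -> `|c j| <= L) ->
  (forall j k, (0 < j)%N -> (0 < k)%N ->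
     (j + k)%:R * c (j + k)%N <= j%:R * c j + k%:R * c k) ->
  forall n m, (0 < n)%N -> (0 < m)%N -> m%:R * c m <= m%:R * c n + 2 * n%:R * L.
Proof.
move=> L0 cb cs n m n0; elim/ltn_ind: m => m IH m0.
have /ler_normlP [cm1 cm2] := cb m m0.
have /ler_normlP [cn1 cn2] := cb n n0.
case: (leqP m n) => mn.
  have mn' : m%:R <= n%:R :> R by rewrite ler_nat.
  have m0' : 0 <= m%:R :> R by [].
  nra.
have k0 : (0 < m - n)%N by rewrite subn_gt0.
have := cs n (m - n)%N n0 k0; rewrite subnKC ?(ltnW mn) // => h.
have := IH (m - n)%N; rewrite ltn_subrL n0 m0 => /(_ isT k0) h2.
move: h h2; rewrite natrB ?(ltnW mn) //.
have n0' : 0 <= n%:R :> R by [].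
nra.
Qed.
Section meas.
Context (R : realType) (M : pseudoPMetricType R).

Lemma open_borel (A : set M) : open A -> measurable (A : set (Borel M)).
Proof. by move=> oA; apply: sub_sigma_algebra. Qed.

Lemma cont_mfun (g : M -> R) : continuous g ->
  measurable_fun [set: Borel M] (g : Borel M -> R).
Proof.
move=> cg; apply: (measurability _ (measurable_realfun.RGenOInfty.measurableE R)).
move=> _ [_ [x ->] <-]; rewrite setTI; apply: open_borel.
move/continuousP : cg; apply.
rewrite (_ : `]x, +oo[%classic = [set y | x < y]); first exact: open_gt.
by apply/seteqP; split => y /=; rewrite in_itv /= andbT.
Qed.

Lemma cont_mfunM (g : M -> M) : continuous g ->
  measurable_fun [set: Borel M] (g : Borel M -> Borel M).
Proof.
move=> cg; apply: (@measurability _ _ (Borel M) (Borel M) _ _ (@open M)) => //.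
move=> _ [A oA <-]; rewrite setTI; apply: open_borel.
by move/continuousP : cg; apply.
Qed.


Lemma iter_mfun (g : M -> M) : continuous g -> forall n,
  measurable_fun [set: Borel M] (iter n g : Borel M -> Borel M).
Proof.
move=> cg; elim => [|n IH] /=; first exact: measurable_id.
apply: (@measurableT_comp _ _ _ _ _ _ (g : Borel M -> Borel M)) => //; exact: cont_mfunM.
Qed.

Lemma iter_inv (nu : probability (Borel M) R) (g : M -> M) :
  continuous g -> is_invariant g nu -> forall n (A : set (Borel M)),
  measurable A -> nu (iter n g @^-1` A) = nu A.
Proof.
move=> cg inv; elim => [|n IH] A mA //.
have -> : iter n.+1 g @^-1` A = iter n g @^-1` (g @^-1` A) by [].
rewrite IH; first exact: inv.
by have := cont_mfunM cg measurableT mA; rewrite setTI.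
Qed.

Lemma int_inv_abs (nu : probability (Borel M) R) (F : Borel M -> Borel M)
  (mF : measurable_fun [set: Borel M] F)
  (inv : forall A, measurable A -> nu (F @^-1` A) = nu A)
  (g : Borel M -> \bar R) (mg : measurable_fun [set: Borel M] g) :
  (\int[nu]_x `|g (F x)| = \int[nu]_x `|g x|)%E.
Proof.
have := ge0_integral_pushforward mF nu measurableT (measurableT_comp (@abse_measurable R setT) mg).
rewrite preimage_setT => <-; last by move=> y _; exact: abse_ge0.
apply: eq_measure_integral => A mA _.
transitivity (nu (F @^-1` A)); [by [] | exact: inv].
Qed.


Lemma int_inv (nu : probability (Borel M) R) (F : Borel M -> Borel M)
  (mF : measurable_fun [set: Borel M] F)
  (inv : forall A, measurable A -> nu (F @^-1` A) = nu A)
  (g : Borel M -> \bar R) (mg : measurable_fun [set: Borel M] g) :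
  nu.-integrable setT g ->
  nu.-integrable setT (fun x => g (F x)) /\
  (\int[nu]_x g (F x) = \int[nu]_x g x)%E.
Proof.
move=> ig.
have iF : nu.-integrable setT (fun x => g (F x)).
  apply/integrableP; split; first exact: measurableT_comp mg mF.
  by rewrite (int_inv_abs mF inv mg); move/integrableP : ig => [].
split => //.
have iF' : nu.-integrable (F @^-1` setT) (g \o F) by rewrite preimage_setT.
have := integral_pushforward mF (mu:=nu) mg iF' measurableT.
rewrite preimage_setT => <- //.
apply: eq_measure_integral => A mA _.
transitivity (nu (F @^-1` A)); [by [] | exact: inv].
Qed.


Lemma int_bound (nu : probability (Borel M) R) (g : M -> R) (c : R) :
  continuous g -> 0 <= c ->
  {ae nu, forall x : Borel M, `|g x| <= c} ->
  nu.-integrable setT (fun x => (g x)%:E) /\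
  (`| \int[nu]_x (g x)%:E | <= c%:E)%E.
Proof.
move=> cg c0 hae.
have mg : measurable_fun [set: Borel M] (fun x => (g x)%:E).
  by apply/measurable_EFinP; exact: cont_mfun.
have hle : (\int[nu]_x `|(g x)%:E| <= c%:E)%E.
  apply: le_trans (_ : (\int[nu]_x (cst c%:E) x <= _)%E).
    apply: ae_ge0_le_integral => //.
      exact: measurableT_comp (@abse_measurable R setT) mg.
    by apply: filterS hae => x h _; rewrite /= lee_fin.
  by rewrite integral_cst // -[X in (_ * X)%E]/(nu [set: Borel M]) probability_setT mule1.
split.
  apply/integrableP; split => //; apply: le_lt_trans hle _; exact: ltry.
apply: le_trans hle; exact: le_abse_integral.
Qed.


Section facts.
Variables (f : M -> M) (phi : nat -> M -> R) (L : R).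
Hypotheses (cf : continuous f) (cphi : forall n, continuous (phi n)) (L0 : 0 <= L).
Variable nu : probability (Borel M) R.
Hypothesis inv : is_invariant f nu.
Hypothesis hae : forall n, (0 < n)%N ->
  {ae nu, forall x : Borel M, `|phi n x| / n%:R <= L}.

Definition aa n := fine (\int[nu]_x (phi n x)%:E)%E.

Lemma facts1 n : (0 < n)%N ->
  [/\ nu.-integrable setT (fun x => (phi n x)%:E),
      `|aa n| <= n%:R * L,
      (\int[nu]_x (phi n x)%:E = (aa n)%:E)%E &
      (\int[nu]_x (phi n x / n%:R)%:E = (aa n / n%:R)%:E)%E].
Proof.
move=> n0.
have n0' : 0 < n%:R :> R by rewrite ltr0n.
have hae' : {ae nu, forall x : Borel M, `|phi n x| <= n%:R * L}.
  by apply: filterS (hae n0) => x; rewrite ler_pdivrMr // mulrC.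
have [ig hb] := int_bound (@cphi n) (mulr_ge0 (ler0n _ _) L0) hae'.
have fin := integrable_fin_num measurableT ig.
have E : (\int[nu]_x (phi n x)%:E = (aa n)%:E)%E by rewrite /aa fineK.
split => //.
  by move: hb; rewrite E lee_fin.
rewrite (_ : (fun x => (phi n x / n%:R)%:E) = (fun x => (n%:R^-1)%:E * (phi n x)%:E)%E); last first.
  by apply/funext => x; rewrite -EFinM mulrC.
by rewrite integralZl // E -EFinM mulrC.
Qed.

Lemma facts_comp n m : (0 < m)%N ->
  nu.-integrable setT (fun x => (phi m (iter n f x))%:E) /\
  (\int[nu]_x (phi m (iter n f x))%:E = (aa m)%:E)%E.
Proof.
move=> m0; have [ig _ E _] := facts1 m0.
have mg : measurable_fun [set: Borel M] (fun x => (phi m x)%:E).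
  by apply/measurable_EFinP; exact: cont_mfun (@cphi m).
have [i2 e2] := int_inv (iter_mfun cf n) (iter_inv cf inv n) mg ig.
by rewrite e2 E.
Qed.

Lemma facts_sub n m : (0 < n)%N -> (0 < m)%N -> subadditive_seq f phi ->
  aa (n + m) <= aa n + aa m.
Proof.
move=> n0 m0 sub.
have [i1 _ E1 _] := facts1 n0.
have [i2 _ E2 _] := facts1 m0.
have nm0 : (0 < n + m)%N by rewrite addn_gt0 n0.
have [i3 _ E3 _] := facts1 nm0.
have [i4 E4] := facts_comp n m0.
rewrite -lee_fin EFinD -E1 -E3 -E4 -integralD //.
apply: le_integral => //; first exact: integrableD.
by move=> x _; rewrite lee_fin; exact: sub.
Qed.

Lemma facts_super n m : (0 < n)%N -> (0 < m)%N -> superadditive_seq f phi ->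
  aa n + aa m <= aa (n + m).
Proof.
move=> n0 m0 sub.
have [i1 _ E1 _] := facts1 n0.
have [i2 _ E2 _] := facts1 m0.
have nm0 : (0 < n + m)%N by rewrite addn_gt0 n0.
have [i3 _ E3 _] := facts1 nm0.
have [i4 E4] := facts_comp n m0.
rewrite -lee_fin EFinD -E1 -E3 -E4 -integralD //.
apply: le_integral => //; first exact: integrableD.
by move=> x _; rewrite lee_fin; exact: sub.
Qed.

End facts.

End meas.

Lemma nu_bounds (R : realType) (M : pseudoPMetricType R) (f : M -> M)
  (phi : nat -> M -> R) (L : R) :
  continuous f -> (forall n, continuous (phi n)) -> 0 <= L ->
  forall nu : probability (Borel M) R, is_invariant f nu ->
  (forall n, (0 < n)%N -> {ae nu, forall x : Borel M, `|phi n x| / n%:R <= L}) ->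
  forall n m, (0 < n)%N -> (0 < m)%N ->
  (subadditive_seq f phi ->
     aa phi nu m / m%:R <= aa phi nu n / n%:R + 2 * L * n%:R / m%:R) /\
  (superadditive_seq f phi ->
     aa phi nu n / n%:R - 2 * L * n%:R / m%:R <= aa phi nu m / m%:R).
Proof.
move=> cf cphi L0 nu inv hae n m n0 m0.
pose c j := aa phi nu j / j%:R.
have key j : (0 < j)%N -> j%:R * c j = aa phi nu j.
  by move=> j0; rewrite /c mulrC divfK // pnatr_eq0 -lt0n.
have cb j : (0 < j)%N -> `|c j| <= L.
  move=> j0; have [_ hb _ _] := facts1 cphi L0 hae j0.
  have j0' : 0 < j%:R :> R by rewrite ltr0n.
  move: hb; rewrite -(key j j0) normrM ger0_norm ?ler0n // => hb.
  by rewrite -(ler_pM2l j0').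
have n0' : 0 < n%:R :> R by rewrite ltr0n.
have m0' : 0 < m%:R :> R by rewrite ltr0n.
set t := 2 * L * n%:R / m%:R.
have ht : m%:R * t = 2 * n%:R * L.
  by rewrite /t mulrC divfK ?pnatr_eq0 -?lt0n // mulrAC.
split => hs.
  have cs j k : (0 < j)%N -> (0 < k)%N ->
      (j + k)%:R * c (j + k)%N <= j%:R * c j + k%:R * c k.
    move=> j0 k0; have jk0 : (0 < j + k)%N by rewrite addn_gt0 j0.
    by rewrite !key //; exact: (facts_sub cf cphi L0 inv hae j0 k0 hs).
  have := sub_bound L0 cb cs n0 m0.
  move=> h; change (c m <= c n + t); nra.
pose c' j := - c j.
have cb' j : (0 < j)%N -> `|c' j| <= L by move=> j0; rewrite normrN; exact: cb.
have cs j k : (0 < j)%N -> (0 < k)%N ->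
    (j + k)%:R * c' (j + k)%N <= j%:R * c' j + k%:R * c' k.
  move=> j0 k0; have jk0 : (0 < j + k)%N by rewrite addn_gt0 j0.
  rewrite /c' !mulrN !key // -opprD lerN2; exact: (facts_super cf cphi L0 inv hae j0 k0 hs).
have := sub_bound L0 cb' cs n0 m0.
rewrite /c' !mulrN => h.
change (c n - t <= c m); nra.
Qed.

Unset Implicit Arguments.

Theorem lemma6p1 (R : realType) (M : pseudoPMetricType R) (f : M -> M)
  (phi : nat -> M -> R) (L : R) :
  hausdorff_space M -> compact [set: M] ->
  continuous f -> (forall n, continuous (phi n)) ->
  0 < L ->
  (forall nu, Mf f nu -> forall n, (0 < n)%N ->
     {ae nu, forall x : Borel M, `|phi n x| / n%:R <= L}) ->
  (subadditive_seq f phi ->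
     (fun n => pressure f (fun x => phi n x / n%:R)) @ \oo -->
       ereal_inf [set pressure f (fun x => phi n x / n%:R) | n in [set n | (0 < n)%N]])
  /\
  (superadditive_seq f phi ->
     (fun n => pressure f (fun x => phi n x / n%:R)) @ \oo -->
       ereal_sup [set pressure f (fun x => phi n x / n%:R) | n in [set n | (0 < n)%N]]).
Proof.
move=> _ _ cf cphi L0 hae.
have L0' : 0 <= L := ltW L0.
have K0 : 0 <= 2 * L by rewrite mulr_ge0.
have Ieq : forall nu, Mf f nu -> forall n, (0 < n)%N ->
   (\int[nu]_x ((fun x => phi n x / n%:R) x)%:E)%E = (aa phi nu n / n%:R)%:E.
  by move=> nu Hnu n n0; have [_ _ _ ->] := facts1 cphi L0' (hae nu Hnu) n0.
split => hs.
  apply: (seq_inf_cvg K0) => n m n0 m0.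
  rewrite /pressure; apply: ge_ereal_sup => _ [nu Hnu <-].
  rewrite Ieq //.
  have [h _] := nu_bounds cf cphi L0' Hnu (hae nu Hnu) n0 m0.
  apply: (@le_trans _ _ (hmu f nu + (aa phi nu n / n%:R)%:E + (2 * L * n%:R / m%:R)%:E)%E).
    by rewrite -addeA leeD2l // -EFinD lee_fin; exact: h.
  by apply: leeD2r; apply: ereal_sup_ubound; exists nu => //; rewrite Ieq.
apply: (seq_sup_cvg K0) => n m n0 m0.
rewrite leeBlDr //.
rewrite /pressure; apply: ge_ereal_sup => _ [nu Hnu <-].
rewrite Ieq //.
have [_ h] := nu_bounds cf cphi L0' Hnu (hae nu Hnu) n0 m0.
apply: (@le_trans _ _ (hmu f nu + (aa phi nu m / m%:R)%:E + (2 * L * n%:R / m%:R)%:E)%E).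
  by rewrite -addeA leeD2l // -EFinD lee_fin -lerBlDr; exact: h.
by apply: leeD2r; apply: ereal_sup_ubound; exists nu => //; rewrite Ieq.
Qed.
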